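(* Let $G+v$ be a graph with an isolated vertex $v$, and let $G$ be the graph obtained from $G+v$ by deleting $v$. Then $\lfloor \mathrm{sp}\rfloor(G+v)=\lfloor \mathrm{sp}\rfloor(G)$. Moreover, if $G$ is a minor of a graph $H$ and $\lfloor \mathrm{sp}\rfloor(G)=\mathrm{sp}(H)$, then there is a graph $H^+$, with exactly one more vertex than $H$, such that $\lfloor \mathrm{sp}\rfloor(G+v)=\mathrm{sp}(H^+)$ and $G+v$ is a minor of $H^+$.
   Context: All graphs are finite, have at least one vertex, have no loops, and may have multiple (parallel) edges. A unique shortest path is a shortest $u$–$v$ path $P$ such that every $u$–$v$ path with the same number of vertices is identical to $P$, where two paths with different edge sequences are different even if their vertex sequences agree; a single vertex is a unique shortest path. The parade number $\mathrm{usp}(G)$ is the largest number of vertices of a unique shortest path in $G$. The spectator number is $\mathrm{sp}(G)=|V(G)|-\mathrm{usp}(G)$. A minor of $H$ is any graph obtained from $H$ by a sequence of: deleting an isolated vertex, deleting an edge, contracting an edge that has no edge parallel to it. The spectator floor $\lfloor \mathrm{sp}\rfloor(G)$ is the minimum of $\mathrm{sp}(H)$ over all graphs $H$ of which $G$ is a minor. *)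

(* Defs.v *)
From mathcomp Require Import all_boot.
From mathcomp Require Import boolp.

Set Implicit Arguments.
Unset Strict Implicit.
Unset Printing Implicit Defensive.

(* A finite multigraph without loops: vertices are 0, ..., nv-1; edges are
   listed in [edges], an edge being identified by its POSITION in the list
   (so parallel edges are distinct edges). An edge (a,b) is unordered. *)
Record graph := Graph { nv : nat; edges : seq (nat * nat) }.

Definition wf (G : graph) : bool :=
  (0 < nv G) &&
  all (fun e : nat * nat => [&& e.1 < nv G, e.2 < nv G & e.1 != e.2]) (edges G).

Definition edge_of (G : graph) (i : nat) : nat * nat := nth (0, 0) (edges G) i.

Definition joins (e : nat * nat) (x y : nat) : bool :=
  (e == (x, y)) || (e == (y, x)).

(* A path: a start vertex and a list of steps (edge index, next vertex). *)
Definition gpath := (nat * seq (nat * nat))%type.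

Definition pverts (p : gpath) : seq nat := p.1 :: map snd p.2.
Definition plast (p : gpath) : nat := last p.1 (map snd p.2).
Definition pnv (p : gpath) : nat := (size p.2).+1.

Fixpoint steps_ok (G : graph) (x : nat) (s : seq (nat * nat)) : bool :=
  match s with
  | [::] => true
  | (i, y) :: s' => [&& i < size (edges G), joins (edge_of G i) x y & steps_ok G y s']
  end.

Definition is_path (G : graph) (p : gpath) : bool :=
  [&& all (fun x => x < nv G) (pverts p), uniq (pverts p) & steps_ok G p.1 p.2].

Definition is_usp (G : graph) (p : gpath) : Prop :=
  is_path G p /\
  (forall q, is_path G q -> q.1 = p.1 -> plast q = plast p -> pnv p <= pnv q) /\
  (forall q, is_path G q -> q.1 = p.1 -> plast q = plast p -> pnv q = pnv p -> q = p).

(* parade number: the largest number of vertices of a unique shortest path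
   (a path has at most nv G vertices, hence the bounded max) *)
Definition usp (G : graph) : nat :=
  \max_(k < (nv G).+1 | `[< exists p, is_usp G p /\ pnv p = k >]) k.

Definition sp (G : graph) : nat := nv G - usp G.

(* relabelling after removal of vertex w *)
Definition shift (w x : nat) : nat := if w < x then x.-1 else x.

Definition isolated (G : graph) (w : nat) : bool :=
  all (fun e : nat * nat => (e.1 != w) && (e.2 != w)) (edges G).

Definition del_vertex (G : graph) (w : nat) : graph :=
  Graph (nv G).-1 (map (fun e : nat * nat => (shift w e.1, shift w e.2)) (edges G)).

Definition rem_at (T : Type) (i : nat) (s : seq T) : seq T :=
  take i s ++ drop i.+1 s.

Definition del_edge (G : graph) (i : nat) : graph :=
  Graph (nv G) (rem_at i (edges G)).

Definition no_parallel (G : graph) (i : nat) : bool :=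
  [forall j : 'I_(size (edges G)),
     (val j != i) ==> ~~ joins (edge_of G j) (edge_of G i).1 (edge_of G i).2].

Definition contract (G : graph) (i : nat) : graph :=
  let a := (edge_of G i).1 in
  let b := (edge_of G i).2 in
  let m x := shift b (if x == b then a else x) in
  Graph (nv G).-1 (map (fun e : nat * nat => (m e.1, m e.2)) (rem_at i (edges G))).

Definition unord (e : nat * nat) : nat * nat := (minn e.1 e.2, maxn e.1 e.2).

Definition iso (G H : graph) : Prop :=
  nv G = nv H /\
  exists f : nat -> nat,
    (forall x, x < nv G -> f x < nv H) /\
    {in [pred x | x < nv G] &, injective f} /\
    perm_eq (map (fun e : nat * nat => unord (f e.1, f e.2)) (edges G))
            (map unord (edges H)).

Inductive minor_step : graph -> graph -> Prop :=
  | ms_del_vertex H w : 1 < nv H -> w < nv H -> isolated H w ->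
      minor_step H (del_vertex H w)
  | ms_del_edge H i : i < size (edges H) -> minor_step H (del_edge H i)
  | ms_contract H i : i < size (edges H) -> no_parallel H i ->
      minor_step H (contract H i)
  | ms_iso H G : iso H G -> minor_step H G.

(* minor G H : G is a minor of H *)
Inductive minor : graph -> graph -> Prop :=
  | minor_refl H : minor H H
  | minor_cons G H H' : minor_step H H' -> minor G H' -> minor G H.

(* spectator floor: min of sp H over graphs H having G as a minor.
   G itself is such an H (for wf G), so the minimum is at most sp G,
   hence the bounded min. *)
Definition spfloor (G : graph) : nat :=
  \big[minn/sp G]_(k < (sp G).+1 |
      `[< exists H, wf H /\ minor G H /\ sp H = k >]) (k : nat).

(* Main.v *)
Require Import Defs.
From mathcomp Require Import all_boot.
From mathcomp Require Import boolp.
From mathcomp Require Import zify.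

Set Implicit Arguments.
Unset Strict Implicit.
Unset Printing Implicit Defensive.

Definition addv (H : graph) := Graph (nv H).+1 (edges H).

Lemma minor_trans A B C : minor A B -> minor B C -> minor A C.
Proof.
move=> hAB hBC; elim: hBC hAB => [//| G H H' st _ IH] hAB.
exact: (minor_cons st (IH hAB)).
Qed.

Lemma wf_edge G e : wf G -> e \in edges G -> [/\ e.1 < nv G, e.2 < nv G & e.1 != e.2].
Proof. by case/andP=> _ /allP h /h /and3P[]. Qed.

Lemma wf_pos G : wf G -> 0 < nv G.
Proof. by case/andP. Qed.

Lemma wf_intro G : 0 < nv G ->
  (forall e, e \in edges G -> [/\ e.1 < nv G, e.2 < nv G & e.1 != e.2]) -> wf G.
Proof.
move=> h1 h2; apply/andP; split=>//; apply/allP=> e /h2 [*]; exact/and3P.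
Qed.

Lemma shift_lt w x n : x < n -> x != w -> w < n -> shift w x < n.-1.
Proof. rewrite /shift; case: ifP => ? ? /eqP ? ?; lia. Qed.

Lemma shift_inj w x y : x != w -> y != w -> shift w x = shift w y -> x = y.
Proof. rewrite /shift; do 2 case: ifP; move=> ? ? /eqP ? /eqP ?; lia. Qed.

Lemma wf_del_vertex H w : 1 < nv H -> w < nv H -> isolated H w -> wf H -> wf (del_vertex H w).
Proof.
move=> h1 h2 /allP iso hw; apply: wf_intro => /=; first lia.
move=> e /mapP [[x y] he ->] /=.
have [/= hx hy hxy] := wf_edge hw he. have /andP[/= hxw hyw] := iso _ he.
split; try exact: shift_lt.
by apply/negP => /eqP /(shift_inj hxw hyw) /eqP; rewrite (negbTE hxy).
Qed.

Lemma mem_rem_at (T : eqType) (i : nat) (s : seq T) x0 x :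
  x \in rem_at i s -> exists2 j, j < size s & (j != i) && (nth x0 s j == x).
Proof.
rewrite /rem_at mem_cat => /orP [] /(nthP x0) [k hk <-].
  rewrite size_take in hk; exists k; first by move: hk; case: ifP => ? ?; lia.
  rewrite nth_take; last by move: hk; case: ifP => ? ?; lia.
  apply/andP; split => //; move: hk; case: ifP => ? ?; lia.
rewrite size_drop in hk; exists (i.+1 + k); first lia.
by rewrite nth_drop; apply/andP; split => //; lia.
Qed.

Lemma mem_rem_at_sub (T : eqType) (i : nat) (s : seq T) x :
  x \in rem_at i s -> x \in s.
Proof. by rewrite /rem_at mem_cat => /orP [] /[dup] _; [apply: mem_take | apply: mem_drop]. Qed.

Lemma wf_del_edge H i : wf H -> wf (del_edge H i).
Proof.
move=> hw; apply: wf_intro; first exact: wf_pos hw.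
by move=> e /mem_rem_at_sub /(wf_edge hw).
Qed.

Lemma wf_contract H i : i < size (edges H) -> no_parallel H i -> wf H -> wf (contract H i).
Proof.
move=> hi /forallP np hw.
set a := (edge_of H i).1; set b := (edge_of H i).2.
have [ha hb hab] : [/\ a < nv H, b < nv H & a != b].
  by apply: wf_edge hw _; exact: mem_nth.
apply: wf_intro => /=; first by move/eqP: hab => ?; lia.
move=> e0 /mapP [e he ->] /=; have [j hj /andP [hji /eqP hje]] := mem_rem_at (0,0) he.
have he0 : e \in edges H by rewrite -hje mem_nth.
have [hx hy hxy] := wf_edge hw he0.
have := np (Ordinal hj) => /=; rewrite hji /= -/a -/b /edge_of hje.
rewrite /joins; case: e {he hje he0} hx hy hxy => x y /= hx hy hxy hj2.
have hm : forall z, z < nv H -> (if z == b then a else z) < nv H /\ (if z == b then a else z) != b.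
  by move=> z hz; case: (z =P b) => [_|/eqP].


have [hx1 hx2] := hm _ hx; have [hy1 hy2] := hm _ hy.
split; try exact: shift_lt.
apply/negP => /eqP /(shift_inj hx2 hy2).
move: hj2 hxy; rewrite !xpair_eqE; case: (x =P b); case: (y =P b); move=> /= ? ? ? ? ?; subst; lia.
Qed.

Lemma wf_iso H G : iso H G -> wf H -> wf G.
Proof.
case=> hn [f [hf [finj hp]]] hw.
apply: wf_intro; first by rewrite -hn; exact: wf_pos.
move=> e he.
have : unord e \in map unord (edges G) by apply: map_f.
rewrite -(perm_mem hp) => /mapP [[x y] hxy] /= heq.
have [/= hx hy hne] := wf_edge hw hxy.
have fx := hf _ hx; have fy := hf _ hy.
have fne : f x != f y.
  by apply/negP => /eqP /(finj _ _ hx hy) /eqP; rewrite (negbTE hne).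
move: heq; rewrite /unord => -[h1 h2].
split; lia.
Qed.

Lemma wf_step H H' : minor_step H H' -> wf H -> wf H'.
Proof.
case=> [K w h1 h2 h3|K i h1|K i h1 h2|K G h].
- exact: wf_del_vertex.
- exact: wf_del_edge.
- exact: wf_contract.
- exact: wf_iso.
Qed.

Lemma iso_addv H G : iso H G -> wf H -> iso (addv H) (addv G).
Proof.
case=> hn [f [hf [finj hp]]] hw; split; first by rewrite /= hn.
exists (fun x => if x == nv H then nv G else f x); split; [|split].
- move=> x /= hx; case: eqP => [_|/eqP ne]; first lia.
  have : x < nv H by lia.
  move/hf; lia.
- move=> x y; rewrite !inE /= => hx hy.
  case: (x =P nv H) => ex; case: (y =P nv H) => ey.
  + by rewrite ex ey.
  + have : y < nv H by lia.
    move/hf; lia.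
  + have : x < nv H by lia.
    move/hf; lia.
  + apply: finj; rewrite inE; lia.
- rewrite /=.
  have -> : [seq unord ((if e.1 == nv H then nv G else f e.1), (if e.2 == nv H then nv G else f e.2)) | e <- edges H] = [seq unord (f e.1, f e.2) | e <- edges H].
    apply/eq_in_map => e he; have [hx hy _] := wf_edge hw he.
    by rewrite !ifN //; apply/eqP; lia.
  exact: hp.
Qed.

Lemma lift_step H H' : minor_step H H' -> wf H -> minor_step (addv H) (addv H').
Proof.
case=> [K w h1 h2 h3|K i h1|K i h1 h2|K G h] hw.
- have -> : addv (del_vertex K w) = del_vertex (addv K) w.
    by rewrite /addv /del_vertex /=; congr Graph; lia.
  by apply: ms_del_vertex => //=; lia.
- exact: ms_del_edge.
- have -> : addv (contract K i) = contract (addv K) i.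
    by rewrite /addv /contract /=; congr Graph; have := wf_pos hw; lia.
  exact: ms_contract.
- apply: ms_iso; exact: iso_addv.
Qed.

Lemma lift_minor G H : minor G H -> wf H -> minor (addv G) (addv H).
Proof.
elim=> [K|G' K K' st _ IH] hw; first exact: minor_refl.
exact: minor_cons (lift_step st hw) (IH (wf_step st hw)).
Qed.

Definition ext (H : graph) (w : nat) := Graph (nv H).+1 (edges H ++ [:: (w, nv H)]).

Lemma steps_cat G x s t :
  steps_ok G x (s ++ t) = steps_ok G x s && steps_ok G (last x (map snd s)) t.
Proof. by elim: s x => [|[i y] s IH] x //=; rewrite IH !andbA. Qed.

Lemma steps_ext H w x s : steps_ok H x s -> steps_ok (ext H w) x s.
Proof.
elim: s x => [|[i y] s IH] x //= /and3P [hi hj hs]; apply/and3P; split.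
- rewrite size_cat; lia.
- by rewrite /edge_of /= nth_cat hi.
- exact: IH.
Qed.

Lemma steps_res H w x s : steps_ok (ext H w) x s ->
  all (fun y => y < nv H) (x :: map snd s) -> steps_ok H x s.
Proof.
elim: s x => [|[i y] s IH] x //= /and3P [hi hj hs] /and3P [hx hy hall].
have hi' : i < size (edges H).
  move: hj; rewrite /edge_of /= nth_cat; case: ltnP => // hge.
  have -> : i - size (edges H) = 0 by rewrite size_cat /= in hi; lia.
  rewrite /= /joins !xpair_eqE => h; lia.
apply/and3P; split => //.
- by move: hj; rewrite /edge_of /= nth_cat hi'.
- by apply: IH => //=; rewrite hy.
Qed.

Lemma pverts_rcons (x : nat) s j y : pverts (x, rcons s (j, y)) = rcons (pverts (x, s)) y.
Proof. by rewrite /pverts /= map_rcons. Qed.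

Lemma plast_in p : plast p \in pverts p.
Proof. exact: mem_last. Qed.

Lemma usp_ext H p : wf H -> is_usp H p ->
  is_usp (ext H (plast p)) (p.1, rcons p.2 (size (edges H), nv H)).
Proof.
move=> hw [hp [hmin huniq]].
move: (hp) => /and3P [hall hu hs].
set N := nv H; set E := size (edges H); set w := plast p.
have hwN : w < N by apply: (allP hall); exact: plast_in.
have hNp : N \notin pverts p by apply/negP => /(allP hall); rewrite ltnn.
have hpath : is_path (ext H w) (p.1, rcons p.2 (E, N)).
  apply/and3P; split.
  - rewrite pverts_rcons all_rcons /= ltnSn /=.
    by apply: sub_all hall => y /= hy; rewrite ltnS ltnW.
  - by rewrite pverts_rcons rcons_uniq hNp.
  - rewrite /= -cats1 steps_cat (steps_ext w hs) /=.
    rewrite size_cat /= addn1 ltnSn /edge_of /= nth_cat ltnn subnn /=.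
    by rewrite /joins eqxx.
split => //.
have key : forall q, is_path (ext H w) q -> q.1 = p.1 -> plast q = N ->
   exists s, [/\ q = (p.1, rcons s (E, N)) & is_path H (p.1, s) /\ plast (p.1, s) = w].
  case=> x qs /and3P [qall qu qs1] /= ex; subst x.
  case/lastP: qs qall qu qs1 => [|s [j y]].
    rewrite /plast /= => _ _ _ h; have : p.1 < N by apply: (allP hall); rewrite inE eqxx.
    by rewrite h ltnn.
  move=> qall qu qs1; rewrite /plast map_rcons last_rcons /= => hy; subst y.
  move: qall qu; rewrite pverts_rcons all_rcons rcons_uniq => /andP [_ qall] /andP [hN qu].
  have qall' : all (fun y => y < N) (pverts (p.1, s)).
    apply/allP => y hy; have := allP qall y hy; rewrite ltnS leq_eqVlt => /orP [/eqP ey|//].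
    by exfalso; move/negP: hN; apply; rewrite /N -ey.
  move: qs1; rewrite -cats1 steps_cat => /andP [hs1 /and3P [hj hjn _]].
  have hs1' := steps_res hs1 qall'.
  set x := last p.1 (map snd s) in hjn *.
  have hxN : x < N by apply: (allP qall'); exact: mem_last.
  have ej : j = E.
    move: hjn; rewrite /edge_of /= nth_cat; case: ltnP => hjE.
      have := wf_edge hw (mem_nth (0,0) hjE); case: (nth _ _ j) => a b /= [ha hb _].
      rewrite /joins !xpair_eqE.
      case/orP => /andP [] => [_ /eqP eb|/eqP ea _].
        by move: hb; rewrite eb /N ltnn.
      by move: ha; rewrite ea /N ltnn.
    move=> _; move: hj; rewrite size_cat /= => hj.
    by apply/eqP; rewrite eqn_leq hjE andbT; move: hj; rewrite addn1 ltnS.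
  subst j.
  have ex : x = w.
    move: hjn; rewrite /edge_of /= nth_cat ltnn subnn /= /joins !xpair_eqE.
    case/orP => /andP [/eqP h _] //.
    by exfalso; move: hwN; rewrite h ltnn.
  exists s; split; first by rewrite cats1.
  by split => //; apply/and3P; split.
have hlN : plast (p.1, rcons p.2 (E, N)) = N by rewrite /plast map_rcons last_rcons.
split.
- move=> q hq h1; rewrite hlN => h2; have [s [-> [hq0 hl]]] := key q hq h1 h2.
  by have := hmin _ hq0 erefl hl; rewrite /pnv /= !size_rcons.
- move=> q hq h1; rewrite hlN => h2 h3; have [s [eq [hq0 hl]]] := key q hq h1 h2.
  subst q; move: h3; rewrite /pnv /= !size_rcons => /eqP; rewrite eqSS => /eqP h3.
  have := huniq _ hq0 erefl hl; rewrite /pnv /= h3 => /(_ erefl) ep.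
  by rewrite -ep.
Qed.

Lemma pnv_le H p : is_path H p -> pnv p <= nv H.
Proof.
case/and3P=> hall hu _.
have -> : pnv p = size (pverts p) by rewrite /pverts /= size_map.
rewrite -[nv H](size_iota 0); apply: uniq_leq_size => // x hx.
by rewrite mem_iota add0n (allP hall).
Qed.

Lemma usp_ge H p : is_usp H p -> pnv p <= usp H.
Proof.
move=> hu; have h := pnv_le hu.1; rewrite -ltnS in h.
rewrite /usp; apply: (leq_bigmax_cond (Ordinal h)) => /=.
by apply/asboolP; exists p; split.
Qed.

Lemma usp_single H : 0 < nv H -> is_usp H (0, [::]).
Proof.
move=> h; split; first by rewrite /is_path /= h.
split; first by move=> q _ _ _; rewrite /pnv.
case=> x s _ /= -> _; rewrite /pnv /= => /eqP; rewrite eqSS size_eq0 => /eqP -> //.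
Qed.

Lemma usp_ex H : wf H -> exists p, is_usp H p /\ pnv p = usp H.
Proof.
move=> hw; have h1 := usp_ge (usp_single (wf_pos hw)).
suff : usp H = 0 \/ exists p, is_usp H p /\ pnv p = usp H.
  by case => // h; rewrite h in h1.
rewrite /usp; apply: (big_ind (fun y => y = 0 \/ exists p, is_usp H p /\ pnv p = y)).
- by left.
- move=> x y hx hy; have [->|->] : maxn x y = x \/ maxn x y = y by lia.
  + exact: hx.
  + exact: hy.
- move=> i /asboolP [p [hp hs]]; right; by exists p.
Qed.

Lemma bigmin_seq (I : eqType) (r : seq I) (P : pred I) (F : I -> nat) x :
  (\big[minn/x]_(i <- r | P i) F i <= x) /\
  forall i, i \in r -> P i -> \big[minn/x]_(i <- r | P i) F i <= F i.
Proof.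
elim: r => [|a r [IH1 IH2]]; first by rewrite big_nil; split.
rewrite big_cons; split; first by case: ifP => _ //; lia.
move=> i; rewrite inE => /orP [/eqP ->|hi] hP.
  by rewrite hP; lia.
have := IH2 i hi hP; case: ifP => _ //; lia.
Qed.

Lemma spfloor_le G K : wf K -> minor G K -> spfloor G <= sp K.
Proof.
move=> hw hm; rewrite /spfloor.
have [h1 h2] := bigmin_seq (index_enum 'I_(sp G).+1)
   (fun k : 'I_(sp G).+1 => `[< exists H, wf H /\ minor G H /\ sp H = k >])
   (fun k : 'I_(sp G).+1 => (k : nat)) (sp G).
case: (ltnP (sp K) (sp G).+1) => h; last first.
  by apply: leq_trans h1 _; apply: ltnW.
apply: (h2 (Ordinal h)); first exact: mem_index_enum.
by apply/asboolP; exists K.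
Qed.

Lemma spfloor_ex G : wf G -> exists K, [/\ wf K, minor G K & sp K = spfloor G].
Proof.
move=> hw; rewrite /spfloor.
apply: (big_ind (fun y => exists K, [/\ wf K, minor G K & sp K = y])).
- by exists G; split => //; exact: minor_refl.
- move=> x y hx hy; have [->|->] : minn x y = x \/ minn x y = y by lia.
  + exact: hx.
  + exact: hy.
- move=> i /asboolP [K [hK [hm hs]]]; by exists K.
Qed.

Lemma iso_Gv Gv v : wf Gv -> 1 < nv Gv -> v < nv Gv -> isolated Gv v ->
  iso (addv (del_vertex Gv v)) Gv.
Proof.
move=> hw h1 hv /allP hiso; split; first by rewrite /=; lia.
pose F x := if x == (nv Gv).-1 then v else if x < v then x else x.+1.
have hF : forall x, x < nv Gv -> x != v -> F (shift v x) = x.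
  by move=> x hx hxv; rewrite /shift; case: ltnP => ?; rewrite /F; repeat (case: ifP => ?); lia.
exists F; split; [|split].
- by move=> x /= hx; rewrite /F; repeat (case: ifP => ?); lia.
- by move=> x y; rewrite !inE /= => hx hy; rewrite /F; repeat (case: ifP => ?); lia.
- rewrite /= -map_comp.
  have -> : [seq ((fun e => unord (F e.1, F e.2)) \o (fun e => (shift v e.1, shift v e.2))) i | i <- edges Gv] = [seq unord i | i <- edges Gv].
    apply/eq_in_map => e he /=.
    have [e1 e2 _] := wf_edge hw he; have /andP [n1 n2] := hiso e he.
    by rewrite !hF //; case: e {he e1 e2 n1 n2}.
  exact: perm_refl.
Qed.

Lemma main_ext Gv v H : wf Gv -> 1 < nv Gv -> v < nv Gv -> isolated Gv v ->
  wf H -> minor (del_vertex Gv v) H ->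
  exists Hp, [/\ wf Hp, nv Hp = (nv H).+1, sp Hp <= sp H & minor Gv Hp].
Proof.
move=> hw h1 hv hiso hwH hm.
have [p [hp hpn]] := usp_ex hwH.
have hu := usp_ext hwH hp.
have hwN : plast p < nv H.
  by case/and3P: hp.1 => hall _ _; apply: (allP hall); exact: plast_in.
exists (ext H (plast p)); split => //.
- apply: wf_intro => //= e; rewrite mem_cat => /orP [he|].
    by have [? ? ?] := wf_edge hwH he; split => //; apply: ltnW.
  rewrite inE => /eqP -> /=; split => //.
    exact: ltnW.
  by apply/eqP => ee; rewrite ee ltnn in hwN.
- have := usp_ge hu; rewrite /sp /pnv /= size_rcons -hpn /pnv; lia.
- have hE : size (edges H) < size (edges (ext H (plast p))) by rewrite size_cat /= addn1.
  apply: (minor_cons (ms_del_edge hE)).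
  have -> : del_edge (ext H (plast p)) (size (edges H)) = addv H.
    by rewrite /del_edge /addv /rem_at /= take_size_cat // drop_oversize ?cats0 // size_cat /= addn1.
  apply: minor_trans (lift_minor hm hwH).
  apply: (minor_cons (ms_iso (iso_Gv hw h1 hv hiso))).
  exact: minor_refl.
Qed.

Theorem lemma2p3 (Gv : graph) (v : nat) :
  wf Gv -> 1 < nv Gv -> v < nv Gv -> isolated Gv v ->
  spfloor Gv = spfloor (del_vertex Gv v) /\
  (forall H : graph, wf H -> minor (del_vertex Gv v) H ->
     spfloor (del_vertex Gv v) = sp H ->
     exists Hp : graph,
       [/\ wf Hp, nv Hp = (nv H).+1, spfloor Gv = sp Hp & minor Gv Hp]).
Proof.
move=> hw h1 hv hiso.
set G := del_vertex Gv v.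
have hG : wf G by exact: wf_del_vertex.
have hGm : minor G Gv.
  apply: (minor_cons (ms_del_vertex h1 hv hiso)); exact: minor_refl.
have eq1 : spfloor Gv = spfloor G.
  apply/eqP; rewrite eqn_leq; apply/andP; split.
  - have [K [hK hmK hsK]] := spfloor_ex hG.
    have [Hp [hHp _ hsp hmp]] := main_ext hw h1 hv hiso hK hmK.
    by apply: leq_trans (spfloor_le hHp hmp) _; rewrite -hsK.
  - have [K [hK hmK hsK]] := spfloor_ex hw.
    by rewrite -hsK; apply: spfloor_le hK (minor_trans hGm hmK).
split => // H hH hm heq.
have [Hp [hHp hn hsp hmp]] := main_ext hw h1 hv hiso hH hm.
exists Hp; split => //.
apply/eqP; rewrite eqn_leq spfloor_le //= eq1 heq //.
Qed.
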